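(* Let $b\geq 2$ be fixed. For all $\beta\in\mathbb{R}$ with $\beta\notin\mathbb{Z}$ and all $N\geq 2$, \[ \left|\sum_{\substack{1\le m\leq N\\ (\overleftarrow{m},b)=1}}e(m\beta)\right|\ll_b\frac{\log N}{\|\beta\|}. \]
   Context: For a positive integer $n$ with $L$ digits in base $b$, $n=\sum_{0\leq i<L}\varepsilon_i(n)b^i$ ($\varepsilon_i(n)\in\{0,\dots,b-1\}$, $\varepsilon_{L-1}(n)\neq0$), its digital reverse is $\overleftarrow{n}=\sum_{0\leq i<L}\varepsilon_i(n)b^{L-1-i}$. $e(x)=\exp(2\pi ix)$ and $\|x\|=\min_{n\in\mathbb{Z}}|x-n|$. *)

(* Defs.v *)
From Stdlib Require Import Reals Lra Lia Arith.
Open Scope R_scope.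

(* Digital reversal in base b, by the accumulator recursion
   rev_acc n acc = (reverse digits of n appended to acc); fuel >= n suffices. *)
Fixpoint rev_acc (b fuel n acc : nat) : nat :=
  match fuel with
  | O => acc
  | S f => if Nat.eqb n 0 then acc
           else rev_acc b f (Nat.div n b) (acc * b + Nat.modulo n b)%nat
  end.

Definition digrev (b n : nat) : nat := rev_acc b n n 0%nat.

Definition dist_Z (x : R) : R := Rmin (frac_part x) (1 - frac_part x).

Definition cond (b m : nat) : bool := Nat.eqb (Nat.gcd (digrev b m) b) 1.

(* real and imaginary parts of  sum_{1<=m<=N, (rev m, b)=1} e(m beta),
   e(x) = exp(2 pi i x) = cos(2 pi x) + i sin(2 pi x) *)
Definition Ssum_re (b : nat) (beta : R) (N : nat) : R :=
  sum_f_R0 (fun k => if cond b (S k) then cos (2 * PI * INR (S k) * beta) else 0)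
           (N - 1).
Definition Ssum_im (b : nat) (beta : R) (N : nat) : R :=
  sum_f_R0 (fun k => if cond b (S k) then sin (2 * PI * INR (S k) * beta) else 0)
           (N - 1).

Definition Ssum_abs (b : nat) (beta : R) (N : nat) : R :=
  sqrt (Ssum_re b beta N ^ 2 + Ssum_im b beta N ^ 2).

(* Main.v *)
Require Import Defs.
From Stdlib Require Import Reals.
From Stdlib Require Import Lra Lia Arith ZArith.
Open Scope R_scope.

Lemma rev_acc_0 b f acc : rev_acc b f 0 acc = acc.
Proof. destruct f; reflexivity. Qed.

Lemma rev_acc_fuel b (hb : (2 <= b)%nat) : forall f1 f2 n acc,
  (n <= f1)%nat -> (n <= f2)%nat -> rev_acc b f1 n acc = rev_acc b f2 n acc.
Proof.
  induction f1 as [|f IH]; intros f2 n acc H1 H2.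
  - assert (n = 0%nat) by lia. subst. rewrite !rev_acc_0. reflexivity.
  - destruct f2 as [|f2].
    + assert (n = 0%nat) by lia. subst. reflexivity.
    + simpl. destruct (Nat.eqb n 0) eqn:E; [reflexivity|].
      apply Nat.eqb_neq in E.
      assert (Nat.div n b < n)%nat by (apply Nat.div_lt; lia).
      apply IH; lia.
Qed.

Lemma rev_acc_mod b (hb : (2 <= b)%nat) : forall f n acc acc',
  (1 <= n)%nat -> (n <= f)%nat ->
  Nat.modulo (rev_acc b f n acc) b = Nat.modulo (rev_acc b f n acc') b.
Proof.
  induction f as [|f IH]; intros n acc acc' H1 H2.
  - lia.
  - simpl. destruct (Nat.eqb n 0) eqn:E.
    + apply Nat.eqb_eq in E. lia.
    + assert (Nat.div n b < n)%nat by (apply Nat.div_lt; lia).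
      destruct (Nat.eq_dec (Nat.div n b) 0) as [Z|Z].
      * rewrite Z, !rev_acc_0.
        rewrite (Nat.add_comm (acc * b)), (Nat.add_comm (acc' * b)).
        rewrite !Nat.Div0.mod_add. reflexivity.
      * apply IH; lia.
Qed.

Lemma digrev_div b (hb : (2 <= b)%nat) m : (b <= m)%nat ->
  Nat.modulo (digrev b m) b = Nat.modulo (digrev b (Nat.div m b)) b.
Proof.
  intros Hm. unfold digrev.
  assert (Hq1 : (1 <= Nat.div m b)%nat).
  { assert (Nat.div b b <= Nat.div m b)%nat by (apply Nat.Div0.div_le_mono; lia).
    rewrite Nat.div_same in H by lia. lia. }
  assert (Hq2 : (Nat.div m b < m)%nat) by (apply Nat.div_lt; lia).
  destruct m as [|m']; [lia|].
  cbn [rev_acc]. replace (Nat.eqb (S m') 0) with false by reflexivity.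
  rewrite (rev_acc_mod b hb m' _ _ 0) by lia.
  rewrite (rev_acc_fuel b hb m' (Nat.div (S m') b)) by lia.
  reflexivity.
Qed.

Lemma cond_div b (hb : (2 <= b)%nat) m : (b <= m)%nat -> cond b m = cond b (Nat.div m b).
Proof.
  intros Hm. unfold cond.
  assert (forall x, Nat.gcd x b = Nat.gcd (Nat.modulo x b) b) as G.
  { intro x. rewrite Nat.Lcm0.gcd_mod by lia. apply Nat.gcd_comm. }
  rewrite (G (digrev b m)), (G (digrev b (Nat.div m b))), digrev_div; auto.
Qed.

Lemma cond_0 b (hb : (2 <= b)%nat) : cond b 0 = false.
Proof.
  unfold cond, digrev. simpl. apply Nat.eqb_neq. lia.
Qed.

Fixpoint ch (b n : nat) : nat :=
  match n with
  | O => O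
  | S k => (ch b k + (if Bool.eqb (cond b k) (cond b (S k)) then 0 else 1))%nat
  end.

Lemma ch_le b m n : (m <= n)%nat -> (ch b m <= ch b n)%nat.
Proof.
  induction 1; [lia|]. simpl. lia.
Qed.

Lemma ch_rec b (hb : (2 <= b)%nat) : forall N,
  (ch b N <= Nat.min N b + ch b (Nat.div N b))%nat.
Proof.
  induction N as [|N IH].
  - simpl. lia.
  - assert (Hmono : (ch b (Nat.div N b) <= ch b (Nat.div (S N) b))%nat)
      by (apply ch_le; apply Nat.Div0.div_le_mono; lia).
    destruct (Nat.lt_ge_cases N b) as [Hl|Hl].
    + simpl ch. destruct (Bool.eqb _ _); lia.
    + pose proof (Nat.div_mod_eq N b) as EN.
      pose proof (Nat.mod_upper_bound N b ltac:(lia)) as RN.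
      set (q := Nat.div N b) in *. set (r := Nat.modulo N b) in *.
      destruct (Nat.eq_dec (S r) b) as [Er|Er].
      * (* b divides N+1 *)
        assert (Hq : Nat.div (S N) b = S q).
        { symmetry. apply (Nat.div_unique _ _ _ 0); lia. }
        rewrite Hq.
        assert (HgN : cond b N = cond b q) by (apply cond_div; lia).
        assert (HgN1 : cond b (S N) = cond b (S q)).
        { rewrite (cond_div b hb (S N)) by lia. rewrite Hq. reflexivity. }
        simpl ch. rewrite HgN, HgN1. lia.
      * assert (Hq : Nat.div (S N) b = q).
        { symmetry. apply (Nat.div_unique _ _ _ (S r)); lia. }
        rewrite Hq.
        assert (HgN : cond b N = cond b q) by (apply cond_div; lia).
        assert (HgN1 : cond b (S N) = cond b q).
        { rewrite (cond_div b hb (S N)) by lia. rewrite Hq. reflexivity. }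
        simpl ch. rewrite HgN, HgN1, Bool.eqb_reflx. lia.
Qed.

Lemma ch_pow b (hb : (2 <= b)%nat) : forall k N, (N < b ^ k)%nat -> (ch b N <= b * k + 1)%nat.
Proof.
  induction k as [|k IH]; intros N HN.
  - simpl in HN. assert (N = 0%nat) by lia. subst. simpl. lia.
  - pose proof (ch_rec b hb N).
    assert (Nat.div N b < b ^ k)%nat.
    { apply Nat.Div0.div_lt_upper_bound. simpl in HN. lia. }
    specialize (IH _ H0). lia.
Qed.

Lemma sin_lin u : 0 <= u -> u <= PI/2 -> u / 3 <= sin u.
Proof.
  intros H1 H2. pose proof PI_4. pose proof PI_RGT_0.
  destruct (SIN u H1 ltac:(lra)) as [Hs _].
  assert (E : sin_lb u = u - u^3/6 + u^5/120 - u^7/5040).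
  { unfold sin_lb, sin_approx, sin_term. simpl. field. }
  rewrite E in Hs.
  assert (u <= 2) by lra.
  assert (u*u <= 4) by nra.
  assert (u^5/120 - u^7/5040 >= 0).
  { assert (u^7 = u^5 * (u*u)) by ring. assert (0 <= u^5) by (apply pow_le; lra). nra. }
  assert (u^3 = u * (u*u)) by ring. nra.
Qed.

Lemma sin_shift x n : Rabs (sin (x + INR n * PI)) = Rabs (sin x).
Proof.
  induction n as [|n IH].
  - simpl. rewrite Rmult_0_l, Rplus_0_r. reflexivity.
  - rewrite S_INR. replace (x + (INR n + 1) * PI) with ((x + INR n * PI) + PI) by ring.
    rewrite neg_sin, Rabs_Ropp. exact IH.
Qed.

Lemma sin_dist beta : (~ exists z : Z, beta = IZR z) ->
  0 < dist_Z beta /\ dist_Z beta <= 2 * Rabs (sin (PI * beta)).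
Proof.
  intros Hnz.
  set (z := Int_part beta). set (f := frac_part beta).
  assert (Ef : beta = IZR z + f) by (unfold f, frac_part, z; ring).
  destruct (base_fp beta) as [F1 F2]. fold f in F1, F2.
  assert (Fnz : f <> 0).
  { intro H0. apply Hnz. exists z. rewrite Ef, H0. ring. }
  assert (Habs : Rabs (sin (PI * beta)) = Rabs (sin (PI * f))).
  { destruct (Z_le_gt_dec 0 z) as [Hz|Hz].
    - destruct (IZN z Hz) as [n Hn]. rewrite Ef, Hn, <- INR_IZR_INZ.
      replace (PI * (INR n + f)) with (PI * f + INR n * PI) by ring.
      apply sin_shift.
    - assert (0 <= - z)%Z by lia. destruct (IZN _ H) as [n Hn].
      assert (IZR z = - INR n) by (rewrite INR_IZR_INZ, <- Hn, opp_IZR; ring).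
      rewrite <- (sin_shift (PI * beta) n). rewrite Ef, H0.
      f_equal. f_equal. ring. }
  pose proof PI_RGT_0. pose proof PI2_3_2.
  assert (Hsp : 0 < sin (PI * f)) by (apply sin_gt_0; nra).
  rewrite Habs, Rabs_right by lra.
  unfold dist_Z. fold f.
  destruct (Rle_dec f (1/2)) as [Hh|Hh].
  - rewrite Rmin_left by lra.
    pose proof (sin_lin (PI * f) ltac:(nra) ltac:(nra)). split; nra.
  - rewrite Rmin_right by lra.
    replace (PI * f) with (PI - PI * (1 - f)) by ring. rewrite sin_PI_x.
    pose proof (sin_lin (PI * (1 - f)) ltac:(nra) ltac:(nra)). split; nra.
Qed.

From Coquelicot Require Import Complex.

Definition ev (beta : R) (m : nat) : C :=
  (cos (2 * PI * INR m * beta), sin (2 * PI * INR m * beta)).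
Definition Fv (beta : R) (m : nat) : C :=
  (sin (2 * PI * INR m * beta + PI * beta) / (2 * sin (PI * beta)),
   - cos (2 * PI * INR m * beta + PI * beta) / (2 * sin (PI * beta))).
Fixpoint Sv (b : nat) (beta : R) (N : nat) : C :=
  match N with
  | O => RtoC 0
  | S n => Cplus (Sv b beta n) (if cond b (S n) then ev beta (S n) else RtoC 0)
  end.
Definition Gv b beta N : C := if cond b N then Fv beta N else RtoC 0.

Lemma ev_F beta n : sin (PI * beta) <> 0 ->
  ev beta (S n) = Cminus (Fv beta (S n)) (Fv beta n).
Proof.
  intros Hs. unfold ev, Fv. rewrite S_INR.
  replace (2 * PI * INR n * beta + PI * beta) with (2 * PI * (INR n + 1) * beta - PI * beta) by ring.
  set (a := 2 * PI * (INR n + 1) * beta). set (t := PI * beta).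
  fold t in Hs.
  apply injective_projections; simpl; rewrite ?sin_plus, ?sin_minus, ?cos_plus, ?cos_minus; field; auto.
Qed.

Lemma Cmod_F beta m : sin (PI * beta) <> 0 ->
  Cmod (Fv beta m) = 1 / (2 * Rabs (sin (PI * beta))).
Proof.
  intros Hs. unfold Cmod, Fv. simpl fst; simpl snd.
  set (u := 2 * PI * INR m * beta + PI * beta).
  assert (Ha : 0 < Rabs (sin (PI * beta))) by (apply Rabs_pos_lt; auto).
  rewrite <- (sqrt_pow2 (1 / (2 * Rabs (sin (PI * beta))))).
  2:{ apply Rlt_le. apply Rdiv_lt_0_compat; lra. }
  f_equal.
  pose proof (sin2_cos2 u) as E. unfold Rsqr in E.
  assert (E2 : Rabs (sin (PI * beta)) ^ 2 = sin (PI * beta) ^ 2) by apply pow2_abs.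
  unfold Rdiv. rewrite !Rpow_mult_distr, !pow_inv.
  assert (R2 : (2 * Rabs (sin (PI * beta))) ^ 2 = (2 * sin (PI * beta)) ^ 2)
    by (rewrite !Rpow_mult_distr, E2; ring).
  rewrite R2.
  assert (Hn : (2 * sin (PI * beta)) ^ 2 <> 0) by (apply pow_nonzero; lra).
  transitivity ((sin u * sin u + cos u * cos u) * / (2 * sin (PI * beta)) ^ 2); [ring|].
  rewrite E. ring.
Qed.

Lemma Sv_inv b (hb : (2 <= b)%nat) beta : sin (PI * beta) <> 0 -> forall N,
  Cmod (Cminus (Sv b beta N) (Gv b beta N)) <= INR (ch b N) / (2 * Rabs (sin (PI * beta))).
Proof.
  intros Hs. assert (Ha : 0 < Rabs (sin (PI * beta))) by (apply Rabs_pos_lt; auto).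
  induction N as [|n IH].
  - unfold Gv. rewrite cond_0 by auto. simpl.
    replace (Cminus (RtoC 0) (RtoC 0)) with (RtoC 0)
      by (apply injective_projections; simpl; ring).
    rewrite Cmod_0. unfold Rdiv. lra.
  - set (D := Cminus (if cond b n then Fv beta n else RtoC 0)
                     (if cond b (S n) then Fv beta n else RtoC 0)).
    assert (E : Cminus (Sv b beta (S n)) (Gv b beta (S n)) =
                Cplus (Cminus (Sv b beta n) (Gv b beta n)) D).
    { unfold D, Gv. simpl Sv.
      destruct (cond b n), (cond b (S n)); rewrite ?(ev_F beta n Hs);
        apply injective_projections; simpl; ring. }
    rewrite E. eapply Rle_trans; [apply Cmod_triangle|].
    simpl ch. rewrite plus_INR.
    assert (HD : Cmod D <= INR (if Bool.eqb (cond b n) (cond b (S n)) then 0 else 1)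
                          / (2 * Rabs (sin (PI * beta)))).
    { unfold D. destruct (cond b n), (cond b (S n)); simpl.
      - replace (Cminus (Fv beta n) (Fv beta n)) with (RtoC 0)
          by (apply injective_projections; simpl; ring).
        rewrite Cmod_0. unfold Rdiv. lra.
      - replace (Cminus (Fv beta n) (RtoC 0)) with (Fv beta n)
          by (apply injective_projections; simpl; ring).
        rewrite Cmod_F by auto. lra.
      - replace (Cminus (RtoC 0) (Fv beta n)) with (Copp (Fv beta n))
          by (apply injective_projections; simpl; ring).
        rewrite Cmod_opp, Cmod_F by auto. lra.
      - replace (Cminus (RtoC 0) (RtoC 0)) with (RtoC 0)
          by (apply injective_projections; simpl; ring).
        rewrite Cmod_0. unfold Rdiv. lra. }
    unfold Rdiv in *. lra.
Qed.

Lemma Sv_bound b (hb : (2 <= b)%nat) beta : sin (PI * beta) <> 0 -> forall N,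
  Cmod (Sv b beta N) <= (INR (ch b N) + 1) / (2 * Rabs (sin (PI * beta))).
Proof.
  intros Hs N.
  replace (Sv b beta N) with (Cplus (Cminus (Sv b beta N) (Gv b beta N)) (Gv b beta N))
    by (apply injective_projections; simpl; ring).
  eapply Rle_trans; [apply Cmod_triangle|].
  pose proof (Sv_inv b hb beta Hs N).
  assert (Cmod (Gv b beta N) <= 1 / (2 * Rabs (sin (PI * beta)))).
  { unfold Gv. destruct (cond b N).
    - rewrite Cmod_F by auto. lra.
    - rewrite Cmod_0. assert (0 < Rabs (sin (PI * beta))) by (apply Rabs_pos_lt; auto).
      apply Rlt_le, Rdiv_lt_0_compat; lra. }
  unfold Rdiv in *. lra.
Qed.

Lemma Ssum_Sv b beta n : Ssum_abs b beta (S n) = Cmod (Sv b beta (S n)).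
Proof.
  unfold Ssum_abs, Cmod.
  assert (H : forall k, Ssum_re b beta (S k) = fst (Sv b beta (S k)) /\
                        Ssum_im b beta (S k) = snd (Sv b beta (S k))).
  { unfold Ssum_re, Ssum_im. induction k as [|k [IH1 IH2]].
    - simpl. destruct (cond b 1); simpl; split; ring.
    - replace (S (S k) - 1)%nat with (S k) by lia.
      replace (S k - 1)%nat with k in IH1, IH2 by lia.
      rewrite !tech5, IH1, IH2. cbn [Sv].
      destruct (cond b (S (S k))); simpl; split; ring. }
  destruct (H n) as [H1 H2]. rewrite H1, H2. reflexivity.
Qed.

Theorem lemma4p6 (b : nat) (hb : (2 <= b)%nat) :
  exists C : R, 0 < C /\
    forall (beta : R) (N : nat),
      (~ exists z : Z, beta = IZR z) ->
      (2 <= N)%nat ->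
      Ssum_abs b beta N <= C * ln (INR N) / dist_Z beta.
Proof.
  assert (Hl2 : 0 < ln 2).
  { rewrite <- ln_1. apply ln_increasing; lra. }
  assert (Hb : 2 <= INR b) by (apply (le_INR 2) in hb; simpl in hb; lra).
  exists ((2 * INR b + 2) / ln 2). split.
  { apply Rdiv_lt_0_compat; lra. }
  intros beta N Hnz HN.
  destruct (sin_dist beta Hnz) as [Hd Hds].
  assert (Hs : sin (PI * beta) <> 0).
  { intro E. rewrite E, Rabs_R0 in Hds. lra. }
  destruct N as [|n]; [lia|].
  rewrite Ssum_Sv.
  pose proof (Sv_bound b hb beta Hs (S n)) as HB.
  set (L := Nat.log2 (S n)).
  destruct (Nat.log2_spec (S n) ltac:(lia)) as [HL1 HL2]. fold L in HL1, HL2.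
  assert (HL : (1 <= L)%nat).
  { unfold L. change 1%nat with (Nat.log2 2). apply Nat.log2_le_mono. lia. }
  assert (Hp : (2 ^ S L <= b ^ S L)%nat) by (apply Nat.pow_le_mono_l; lia).
  pose proof (ch_pow b hb (S L) (S n) ltac:(lia)) as Hch.
  apply le_INR in Hch. rewrite plus_INR, mult_INR, S_INR in Hch. simpl (INR 1) in Hch.
  assert (HLn : INR L * ln 2 <= ln (INR (S n))).
  { rewrite <- ln_pow by lra.
    apply le_INR in HL1. rewrite pow_INR in HL1. replace (INR 2) with 2 in HL1 by (simpl; ring).
    destruct (Req_dec (2 ^ L) (INR (S n))) as [E|E]; [rewrite E; lra|].
    apply Rlt_le, ln_increasing; [apply pow_lt; lra | lra]. }
  apply le_INR in HL. simpl (INR 1) in HL.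
  set (X := INR (ch b (S n)) + 1) in HB.
  assert (HX : X <= (2 * INR b + 2) / ln 2 * ln (INR (S n))).
  { unfold X. apply Rle_trans with ((2 * INR b + 2) * INR L).
    - nra.
    - unfold Rdiv. rewrite Rmult_assoc. apply Rmult_le_compat_l; [lra|].
      apply (Rmult_le_reg_l (ln 2)); [lra|]. field_simplify; lra. }
  set (sa := Rabs (sin (PI * beta))) in *.
  assert (HX0 : 0 <= X) by (unfold X; pose proof (pos_INR (ch b (S n))); lra).
  apply Rle_trans with (X / (2 * sa)); [exact HB|].
  apply Rle_trans with (X / dist_Z beta).
  - unfold Rdiv. apply Rmult_le_compat_l; [lra|].
    apply Rinv_le_contravar; lra.
  - unfold Rdiv. apply Rmult_le_compat_r; [apply Rlt_le, Rinv_0_lt_compat; lra|]. exact HX.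
Qed.
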